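(* Let $R$ be an inp-minimal integral domain. Then the set of prime ideals of $R$ is linearly ordered by inclusion. In particular, every proper radical ideal of $R$ is prime, and there exists $N\in\mathbb N$ such that for all $a,b\in R$, either $b^N\in aR$ or $a^N\in bR$.
   Context: Rings are commutative with identity. A ring is inp-minimal if its theory in the language of rings $(+,\cdot,0,1)$ has burden $1$ (no inp-pattern of depth $2$ in one variable). $aR$ denotes the principal ideal generated by $a$. *)

(* Defs.v *)
From mathcomp Require Import all_boot all_order all_algebra.
Set Implicit Arguments. Unset Strict Implicit. Unset Printing Implicit Defensive.
Import GRing.Theory.
Local Open Scope ring_scope.

(* First-order formulas over R: GRing.formula R (ring language, possibly with
   parameters from R and the definable symbols Inv/Unit).  A "partitioned"
   formula phi(x; y) is read with the object variable x = 'X_0 and the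
   parameter tuple y = ('X_1, 'X_2, ...): phi(a; b) holds iff
   GRing.holds (a :: b) phi. *)
Definition sat2 (R : unitRingType) (phi : GRing.formula R) (a : R) (b : seq R) : Prop :=
  GRing.holds (a :: b) phi.

(* A finite (depth 2, width n) inp-array in R in one variable x:
   rows b1, b2 : nat -> seq R (columns j < n); row i is k_i-inconsistent,
   and every path (j1, j2) is consistent. *)
Definition inp_array2 (R : unitRingType) (phi1 phi2 : GRing.formula R)
    (k1 k2 n : nat) (b1 b2 : nat -> seq R) : Prop :=
  (forall s : seq nat, uniq s -> size s = k1 -> all (fun j => (j < n)%N) s ->
     ~ exists a : R, forall j, j \in s -> sat2 phi1 a (b1 j)) /\
  (forall s : seq nat, uniq s -> size s = k2 -> all (fun j => (j < n)%N) s ->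
     ~ exists a : R, forall j, j \in s -> sat2 phi2 a (b2 j)) /\
  (forall j1 j2, (j1 < n)%N -> (j2 < n)%N ->
     exists a : R, sat2 phi1 a (b1 j1) /\ sat2 phi2 a (b2 j2)).

(* Th(R) has an inp-pattern of depth 2 in one variable (in the monster model)
   iff, by compactness and elementarity, for some formulas and k1, k2 there are
   inp-arrays of every finite width n already in R. *)
Definition has_inp_pattern2 (R : unitRingType) : Prop :=
  exists (phi1 phi2 : GRing.formula R) (k1 k2 : nat),
    forall n : nat, exists b1 b2 : nat -> seq R, inp_array2 phi1 phi2 k1 k2 n b1 b2.

Definition inp_minimal (R : unitRingType) : Prop := ~ has_inp_pattern2 R.

Definition is_ideal (R : comRingType) (I : R -> Prop) : Prop :=
  I 0 /\ (forall x y, I x -> I y -> I (x + y)) /\ (forall r x, I x -> I (r * x)).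

Definition is_proper_ideal (R : comRingType) (I : R -> Prop) : Prop :=
  is_ideal I /\ ~ I 1.

Definition is_prime_ideal (R : comRingType) (P : R -> Prop) : Prop :=
  is_proper_ideal P /\ (forall x y, P (x * y) -> P x \/ P y).

Definition is_radical_ideal (R : comRingType) (I : R -> Prop) : Prop :=
  is_ideal I /\ (forall x (n : nat), I (x ^+ n) -> I x).

Definition in_principal (R : comRingType) (a x : R) : Prop := exists r, x = a * r.

(* Main.v *)
Require Import Defs.
From mathcomp Require Import all_boot all_order all_algebra.
From Stdlib Require Import Classical.
Set Implicit Arguments. Unset Strict Implicit. Unset Printing Implicit Defensive.
Import GRing.Theory.
Local Open Scope ring_scope.

Definition phiD (R : unitRingType) : GRing.formula R :=
  GRing.And (GRing.Exists 3 (GRing.Equal (GRing.Var _ 0) (GRing.Mul (GRing.Var _ 1) (GRing.Var _ 3))))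
            (GRing.Not (GRing.Exists 3 (GRing.Equal (GRing.Var _ 0) (GRing.Mul (GRing.Var _ 2) (GRing.Var _ 3))))).

Lemma sat_phiD (R : unitRingType) (x u v : R) :
  sat2 (phiD R) x [:: u; v] <-> ((exists w, x = u * w) /\ ~ exists w, x = v * w).
Proof. by rewrite /sat2 /=. Qed.

Lemma dvd_exp (R : comRingType) (a b : R) (k m : nat) : (k <= m)%N ->
  in_principal a (b ^+ k) -> in_principal a (b ^+ m).
Proof.
move=> km [r hr]; exists (r * b ^+ (m - k)).
by rewrite -(subnKC km) exprD hr mulrA subnKC.
Qed.

Lemma uniformN (R : idomainType) (hR : inp_minimal R) :
  exists N : nat, forall a b : R, in_principal a (b ^+ N) \/ in_principal b (a ^+ N).
Proof.
apply: NNPP => hN; apply: hR.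
exists (phiD R), (phiD R), 2%N, 2%N => n.
have [a [b [hab hba]]] : exists a b : R, ~ in_principal a (b ^+ n.+1) /\ ~ in_principal b (a ^+ n.+1).
  apply: NNPP => H; apply: hN; exists n.+1 => a b.
  apply: NNPP => H2; apply: H; exists a, b; split => h; apply: H2; [left|right]; exact h.
have a0 : a != 0.
  apply/eqP => a0; apply: hba; exists 0; by rewrite a0 expr0n /= mulr0.
have b0 : b != 0.
  apply/eqP => b0; apply: hab; exists 0; by rewrite b0 expr0n /= mulr0.
exists (fun j => [:: a ^+ j; a ^+ j.+1]), (fun j => [:: b ^+ j; b ^+ j.+1]).
have incons : forall c : R, forall s : seq nat, uniq s -> size s = 2%N ->
    ~ exists x : R, forall j, j \in s -> sat2 (phiD R) x [:: c ^+ j; c ^+ j.+1].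
  move=> c [|j1 [|j2 [|? ?]]] //= /andP [] ; rewrite inE => neq _ _ [x hx].
  have h1 := hx j1; have h2 := hx j2.
  rewrite !inE eqxx /= ?orbT in h1 h2. move: h2; rewrite eqxx orbT => h2.
  move: (h1 isT) (h2 isT) => /sat_phiD [[w1 e1] n1] /sat_phiD [[w2 e2] n2].
  case: (ltngtP j1 j2) => [lt|lt|eq]; last by rewrite eq eqxx in neq.
  - apply: n1; exists (c ^+ (j2 - j1.+1) * w2).
    by rewrite e2 mulrA -exprD subnKC.
  - apply: n2; exists (c ^+ (j1 - j2.+1) * w1).
    by rewrite e1 mulrA -exprD subnKC.
split; first by move=> s u sz _; exact: incons.
split; first by move=> s u sz _; exact: incons.
move=> j1 j2 hj1 hj2; exists (a ^+ j1 * b ^+ j2); split; apply/sat_phiD; split.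
- by exists (b ^+ j2).
- move=> [w hw]; apply: hab; apply: (@dvd_exp _ _ _ j2); first exact: leqW (ltnW hj2).
  exists w; apply: (mulfI (expf_neq0 j1 a0)).
  by rewrite hw exprS !mulrA (mulrC a).
- by exists (a ^+ j1); rewrite mulrC.
- move=> [w hw]; apply: hba; apply: (@dvd_exp _ _ _ j1); first exact: leqW (ltnW hj1).
  exists w; apply: (mulfI (expf_neq0 j2 b0)).
  by rewrite mulrC hw exprS !mulrA (mulrC b).
Qed.

Lemma prime_pow (R : comRingType) (P : R -> Prop) (x : R) (n : nat) :
  is_prime_ideal P -> P (x ^+ n) -> P x.
Proof.
move=> [[[P0 [PD PM]] P1] Pp]; elim: n => [|n IH].
  by rewrite expr0 => h; exfalso; apply: P1.
by rewrite exprS => /Pp [] // /IH.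
Qed.

Theorem mainTheorem3 (R : idomainType) (hR : inp_minimal R) :
  (forall P Q : R -> Prop, is_prime_ideal P -> is_prime_ideal Q ->
     (forall x, P x -> Q x) \/ (forall x, Q x -> P x)) /\
  (forall I : R -> Prop, is_proper_ideal I -> is_radical_ideal I -> is_prime_ideal I) /\
  (exists N : nat, forall a b : R,
     in_principal a (b ^+ N) \/ in_principal b (a ^+ N)).
Proof.
have [N hN] := uniformN hR.
split; last split; last by exists N.
  move=> P Q hP hQ.
  have [[[_ [_ PM]] _] _] := hP; have [[[_ [_ QM]] _] _] := hQ.
  apply: NNPP => H.
  have [x [Px nQx]] : exists x, P x /\ ~ Q x.
    apply: NNPP => H1; apply: H; left => x Px; apply: NNPP => nQ; apply: H1; by exists x.
  have [y [Qy nPy]] : exists y, Q y /\ ~ P y.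
    apply: NNPP => H1; apply: H; right => y Qy; apply: NNPP => nP; apply: H1; by exists y.
  case: (hN x y) => [[r hr]|[r hr]].
  - apply: nPy; apply: (prime_pow (n:=N) hP); rewrite hr mulrC; exact: PM.
  - apply: nQx; apply: (prime_pow (n:=N) hQ); rewrite hr mulrC; exact: QM.
move=> I hI [_ rad]; split => // x y Ixy.
have [[_ [_ IM]] _] := hI.
case: (hN x y) => [[r hr]|[r hr]].
- right; apply: (rad y N.+1); suff -> : y ^+ N.+1 = r * (x * y) by exact: IM.
  rewrite exprS hr mulrA mulrC (mulrC y x). done.
- left; apply: (rad x N.+1); rewrite exprS hr mulrA mulrC; exact: IM.
Qed.
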